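(* Let $f\colon X\to Y$ be a perfect map between metrizable spaces, $d$ a compatible metric on $X$, and $(M,\varrho)$ a complete metric space. Let $m,n\ge1$, $y\in Y$, and $g\in\mathcal{K}(m,n,y)$. Then there exist a neighborhood $V_y$ of $y$ in $Y$ and $\delta_y>0$ such that whenever $y'\in V_y$ and $g_1\in C(X,M)$ satisfies $\varrho(g_1(x),g(x))<\delta_y$ for all $x\in f^{-1}(y')$, we have $g_1\in\mathcal{K}(m,n,y')$.
   Context: For $A\subset X$ and $\delta>0$, $B(A,\delta)=\{x\in X:d(x,A)<\delta\}$. For $g\in C(X,M)$, $y\in Y$, $x\in f^{-1}(y)$, $C(x,g|f^{-1}(y))$ is the component of $g^{-1}(g(x))\cap f^{-1}(y)$ containing $x$. $\mathcal{K}(m,n,y)$ is the set of all $g\in C(X,M)$ such that for every subcontinuum $L\subset f^{-1}(y)$ with $\operatorname{diam} g(L)\ge1/n$ there is $x\in L$ with $C(x,g|f^{-1}(y))\subset B(L,1/m)$. *)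

(* Defs.v *)
From Stdlib Require Import Reals List.
Open Scope R_scope.
Set Implicit Arguments.

Record Metric (T : Type) : Type := {
  mdist : T -> T -> R;
  dist_nonneg : forall x y, 0 <= mdist x y;
  dist_eq0 : forall x y, mdist x y = 0 <-> x = y;
  dist_sym : forall x y, mdist x y = mdist y x;
  dist_tri : forall x y z, mdist x z <= mdist x y + mdist y z
}.

Section Metric_defs.
Variables (T : Type) (d : Metric T).

Definition ball (x : T) (r : R) : T -> Prop := fun z => mdist d x z < r.

Definition open (U : T -> Prop) : Prop :=
  forall x, U x -> exists r, 0 < r /\ forall z, ball x r z -> U z.

Definition nbhd (V : T -> Prop) (x : T) : Prop :=
  exists U, open U /\ U x /\ forall z, U z -> V z.

Definition compact (K : T -> Prop) : Prop :=
  forall C : (T -> Prop) -> Prop,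
    (forall U, C U -> open U) ->
    (forall x, K x -> exists U, C U /\ U x) ->
    exists l : list (T -> Prop),
      (forall U, In U l -> C U) /\ (forall x, K x -> exists U, In U l /\ U x).

Definition connected (A : T -> Prop) : Prop :=
  forall U V, open U -> open V ->
    (forall x, A x -> U x \/ V x) ->
    (forall x, A x -> U x -> V x -> False) ->
    (forall x, A x -> U x) \/ (forall x, A x -> V x).

Definition continuum (L : T -> Prop) : Prop :=
  (exists x, L x) /\ compact L /\ connected L.

Definition component (S : T -> Prop) (x : T) : T -> Prop :=
  fun z => exists A, connected A /\ (forall w, A w -> S w) /\ A x /\ A z.

(** B(A, delta) = { x : d(x, A) < delta }, where d(x,A) = inf_{a in A} d(x,a) *)
Definition Bset (A : T -> Prop) (delta : R) : T -> Prop :=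
  fun x => exists a, A a /\ mdist d x a < delta.

(** diam A >= r, i.e. sup { d(a,b) : a,b in A } >= r *)
Definition diam_ge (A : T -> Prop) (r : R) : Prop :=
  forall s, s < r -> exists a b, A a /\ A b /\ s < mdist d a b.

Definition cauchy (u : nat -> T) : Prop :=
  forall eps, 0 < eps -> exists N, forall p q, (N <= p)%nat -> (N <= q)%nat ->
    mdist d (u p) (u q) < eps.

Definition complete : Prop :=
  forall u, cauchy u -> exists l, forall eps, 0 < eps -> exists N,
    forall p, (N <= p)%nat -> mdist d (u p) l < eps.

Definition closed (F : T -> Prop) : Prop := open (fun x => ~ F x).

End Metric_defs.

Definition continuous (X Y : Type) (dX : Metric X) (dY : Metric Y) (f : X -> Y) : Prop :=
  forall x eps, 0 < eps -> exists delta, 0 < delta /\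
    forall z, mdist dX x z < delta -> mdist dY (f x) (f z) < eps.

Definition perfect (X Y : Type) (dX : Metric X) (dY : Metric Y) (f : X -> Y) : Prop :=
  continuous dX dY f /\
  (forall F, closed dX F -> closed dY (fun y => exists x, F x /\ f x = y)) /\
  (forall y, compact dX (fun x => f x = y)).

Definition image (X M : Type) (g : X -> M) (L : X -> Prop) : M -> Prop :=
  fun p => exists x, L x /\ g x = p.

(** C(x, g|f^{-1}(y)): component of g^{-1}(g(x)) ∩ f^{-1}(y) containing x *)
Definition Cfib (X Y M : Type) (dX : Metric X) (f : X -> Y) (g : X -> M)
  (y : Y) (x : X) : X -> Prop :=
  component dX (fun z => g z = g x /\ f z = y) x.

Definition inK (X Y M : Type) (dX : Metric X) (dM : Metric M) (f : X -> Y)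
  (m n : nat) (y : Y) (g : X -> M) : Prop :=
  continuous dX dM g /\
  forall L : X -> Prop,
    continuum dX L -> (forall x, L x -> f x = y) ->
    diam_ge dM (image g L) (1 / INR n) ->
    exists x, L x /\
      forall z, Cfib dX f g y x z -> Bset dX L (1 / INR m) z.

(* Main.v *)
Require Import Defs.
From Stdlib Require Import Reals Lra Lia List Classical ClassicalEpsilon.
Open Scope R_scope.


Lemma mychoice {A B : Type} (P : A -> B -> Prop) :
  (forall a, exists b, P a b) -> exists h, forall a, P a (h a).
Proof.
  intros H. exists (fun a => proj1_sig (constructive_indefinite_description _ (H a))).
  intros a. exact (proj2_sig (constructive_indefinite_description _ (H a))).
Qed.

Definition ie (i : nat) : R := / (INR i + 1).

Lemma ie_pos i : 0 < ie i.
Proof. unfold ie. apply Rinv_0_lt_compat. pose proof (pos_INR i). lra. Qed.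

Lemma ie_mono i j : (i <= j)%nat -> ie j <= ie i.
Proof.
  intros H. unfold ie. apply Rinv_le_contravar. pose proof (pos_INR i); lra.
  apply le_INR in H. lra.
Qed.

Lemma ie_small eps : 0 < eps -> exists i, ie i < eps.
Proof.
  intros He. destruct (archimed_cor1 eps He) as [N [H1 H2]].
  exists N. unfold ie. eapply Rle_lt_trans; [|exact H1].
  apply Rinv_le_contravar. apply lt_0_INR; lia. lra.
Qed.

Lemma d0 {T} (d : Metric T) x : mdist d x x = 0.
Proof. apply (Defs.dist_eq0 d). reflexivity. Qed.

Lemma dpos {T} (d : Metric T) x y : 0 <= mdist d x y.
Proof. apply (Defs.dist_nonneg d). Qed.

Lemma dtri {T} (d : Metric T) x y z : mdist d x z <= mdist d x y + mdist d y z.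
Proof. apply (Defs.dist_tri d). Qed.

Lemma dsym {T} (d : Metric T) x y : mdist d x y = mdist d y x.
Proof. apply (Defs.dist_sym d). Qed.

Lemma eq_small {T} (d : Metric T) p q :
  (forall eps, 0 < eps -> mdist d p q < eps) -> p = q.
Proof.
  intros H. apply (Defs.dist_eq0 d). pose proof (dpos d p q).
  destruct (Rle_lt_or_eq_dec _ _ H0) as [h|h]; [|lra].
  specialize (H _ h). lra.
Qed.

Lemma ball_open {T} (d : Metric T) x r : open d (ball d x r).
Proof.
  intros z Hz. unfold ball in *. exists (r - mdist d x z). split. lra.
  intros w Hw. pose proof (dtri d x z w). lra.
Qed.

Lemma Bset_open {T} (d : Metric T) S r : open d (Bset d S r).
Proof.
  intros x [a [Ha Hxa]]. exists (r - mdist d x a). split. lra.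
  intros w Hw. unfold ball in Hw. exists a. split; auto.
  pose proof (dtri d w x a). rewrite (dsym d w x) in H. lra.
Qed.

Lemma open_ext {T} (d : Metric T) (U V : T -> Prop) :
  (forall z, U z <-> V z) -> open d U -> open d V.
Proof.
  intros E HU x Hx. apply E in Hx. destruct (HU x Hx) as [r [hr H]].
  exists r. split; auto. intros z Hz. apply E. auto.
Qed.

Lemma connected_ext {T} (d : Metric T) (A B : T -> Prop) :
  (forall z, A z <-> B z) -> connected d A -> connected d B.
Proof.
  intros E HA U V oU oV cov dis.
  destruct (HA U V oU oV) as [h|h].
  - intros x Hx. apply cov, E, Hx.
  - intros x Hx. apply dis, E, Hx.
  - left. intros x Hx. apply h, E, Hx.
  - right. intros x Hx. apply h, E, Hx.
Qed.

Lemma single_connected {T} (d : Metric T) x : connected d (fun w => w = x).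
Proof.
  intros U V _ _ cov _. destruct (cov x eq_refl) as [h|h].
  left; intros; subst; auto. right; intros; subst; auto.
Qed.

Lemma component_self {T} (d : Metric T) (S : T -> Prop) x : S x -> component d S x x.
Proof.
  intros Hx. exists (fun w => w = x). repeat split; auto.
  apply single_connected. intros; subst; auto.
Qed.

Lemma component_connected {T} (d : Metric T) (S : T -> Prop) x :
  connected d (component d S x).
Proof.
  intros U V oU oV cov dis.
  destruct (classic (exists z, component d S x z)) as [[z [A [cA [sA [Ax Az]]]]]|hn].
  2:{ left. intros w Hw. exfalso. apply hn. eauto. }
  assert (cx : component d S x x) by (exists A; auto).
  assert (key : forall (P Q : T -> Prop), open d P -> open d Q ->
     (forall w, component d S x w -> P w \/ Q w) ->
     (forall w, component d S x w -> P w -> Q w -> False) -> P x ->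
     forall w, component d S x w -> P w).
  { intros P Q oP oQ cv ds Px w [B [cB [sB [Bx Bw]]]].
    assert (inB : forall v, B v -> component d S x v) by (intros v Hv; exists B; auto).
    destruct (cB P Q oP oQ) as [h|h].
    - intros v Hv; apply cv; auto.
    - intros v Hv; apply ds; auto.
    - auto.
    - exfalso. apply (ds x cx Px (h x Bx)). }
  destruct (cov x cx) as [h|h].
  - left. apply (key U V); auto.
  - right. apply (key V U); auto. intros w Hw; destruct (cov w Hw); auto.
    intros w Hw a b; apply (dis w Hw b a).
Qed.

Definition nearF {T} (d : Metric T) (F : T -> Prop) (u : nat -> T) : Prop :=
  forall eps, 0 < eps -> exists N, forall k, (N <= k)%nat -> exists c, F c /\ mdist d (u k) c < eps.

Lemma cluster {T} (d : Metric T) (F : T -> Prop) (u : nat -> T) :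
  Defs.compact d F -> nearF d F u ->
  exists p, F p /\ forall eps, 0 < eps -> forall N, exists k, (N <= k)%nat /\ mdist d (u k) p < eps.
Proof.
  intros cF nF. apply NNPP. intros Hn.
  assert (Hp : forall p, F p -> exists e N, 0 < e /\ forall k, (N <= k)%nat -> e <= mdist d (u k) p).
  { intros p Fp. apply NNPP. intros H1. apply Hn. exists p. split; auto.
    intros e he N. apply NNPP. intros H2. apply H1. exists e, N. split; auto.
    intros k hk. destruct (Rle_or_lt e (mdist d (u k) p)) as [h|h]; auto.
    exfalso; apply H2; eauto. }
  set (C := fun U : T -> Prop => exists p e N, F p /\ 0 < e /\
     (forall k, (N <= k)%nat -> e <= mdist d (u k) p) /\ (forall z, U z <-> mdist d p z < e/2)).
  destruct (cF C) as [l [Hl1 Hl2]].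
  - intros U [p [e [N [_ [_ [_ E]]]]]]. apply (open_ext d (ball d p (e/2))).
    intros z; unfold ball; rewrite E; tauto. apply ball_open.
  - intros x Fx. destruct (Hp x Fx) as [e [N [he H]]].
    exists (ball d x (e/2)). split; [|unfold ball; rewrite d0; lra].
    exists x, e, N. repeat split; auto.
  - assert (U : exists eta N, 0 < eta /\ forall U z k, In U l -> U z -> (N <= k)%nat -> eta <= mdist d (u k) z).
    { clear Hl2. induction l as [|U l IH].
      - exists 1, 0%nat. split. lra. intros ? ? ? [].
      - destruct IH as [eta [N [he H]]]. intros V hV; apply Hl1; right; auto.
        destruct (Hl1 U (or_introl eq_refl)) as [p [e [N' [_ [hpe [Hk E]]]]]].
        exists (Rmin eta (e/2)), (Nat.max N N'). split. apply Rmin_glb_lt; lra.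
        intros V z k [<-|hin] Vz hk.
        + apply E in Vz. specialize (Hk k ltac:(lia)). pose proof (dtri d (u k) z p).
          rewrite (dsym d z p) in H0. pose proof (Rmin_r eta (e/2)). lra.
        + specialize (H V z k hin Vz ltac:(lia)). pose proof (Rmin_l eta (e/2)). lra. }
    destruct U as [eta [N [he H]]]. destruct (nF eta he) as [N1 H1].
    destruct (H1 (Nat.max N N1) ltac:(lia)) as [c [Fc hc]].
    destruct (Hl2 c Fc) as [V [hV Vc]]. specialize (H V c (Nat.max N N1) hV Vc ltac:(lia)). lra.
Qed.

Lemma closed_sub_compact {T} (d : Metric T) (F S : T -> Prop) :
  Defs.compact d F -> closed d S -> (forall x, S x -> F x) -> Defs.compact d S.
Proof.
  intros cF clS sub C oC covC.
  set (C' := fun U : T -> Prop => C U \/ (forall z, U z <-> ~ S z)).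
  destruct (cF C') as [l [Hl1 Hl2]].
  - intros U [h|h]. auto. apply (open_ext d (fun z => ~ S z)). firstorder. apply clS.
  - intros x Fx. destruct (classic (S x)) as [h|h].
    + destruct (covC x h) as [U [? ?]]. exists U; split; auto. left; auto.
    + exists (fun z => ~ S z). split; auto. right; tauto.
  - assert (K : exists l2, (forall U, In U l2 -> C U) /\
      forall x, S x -> (exists U, In U l /\ U x) -> exists U, In U l2 /\ U x).
    { clear Hl2. induction l as [|U l IH].
      - exists nil. split. intros ? []. intros x _ [U [[] _]].
      - destruct IH as [l2 [A B]]. intros V hV; apply Hl1; right; auto.
        destruct (Hl1 U (or_introl eq_refl)) as [h|h].
        + exists (U :: l2). split. intros V [<-|hv]; auto.
          intros x Sx [V [[<-|hv] Vx]]. exists U; split; auto; left; auto.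
          destruct (B x Sx) as [W [? ?]]. eauto. exists W; split; auto; right; auto.
        + exists l2. split; auto. intros x Sx [V [[<-|hv] Vx]].
          apply h in Vx; contradiction. apply B; eauto. }
    destruct K as [l2 [A B]]. exists l2. split; auto.
Qed.

Lemma fiber_near {X Y} (dX : Metric X) (dY : Metric Y) (f : X -> Y) y eps :
  perfect dX dY f -> 0 < eps -> exists r, 0 < r /\ forall y', mdist dY y y' < r ->
    forall x, f x = y' -> exists c, f c = y /\ mdist dX x c < eps.
Proof.
  intros [_ [fcl _]] he.
  set (U := Bset dX (fun c => f c = y) eps).
  assert (cl : closed dX (fun x => ~ U x)).
  { apply (open_ext dX U). intros z; split; intros; [tauto|apply NNPP; auto]. apply Bset_open. }
  specialize (fcl _ cl). destruct (fcl y) as [r [hr H]].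
  - intros [x [nU fx]]. apply nU. exists x. split; auto. rewrite d0; auto.
  - exists r. split; auto. intros y' hy x fx.
    destruct (classic (U x)) as [[c [? ?]]|h]. eauto.
    exfalso. apply (H y' hy). exists x; auto.
Qed.

Lemma seq_near {X Y} (dX : Metric X) (dY : Metric Y) (f : X -> Y) y (ys : nat -> Y) :
  perfect dX dY f -> (forall j, mdist dY y (ys j) < ie j) ->
  forall eps, 0 < eps -> exists N, forall j, (N <= j)%nat -> forall x, f x = ys j ->
    exists c, f c = y /\ mdist dX x c < eps.
Proof.
  intros pf hy eps he. destruct (fiber_near dX dY f y eps pf he) as [r [hr H]].
  destruct (ie_small r hr) as [N hN]. exists N. intros j hj x fx. apply (H (ys j)); auto.
  pose proof (hy j); pose proof (ie_mono N j hj). lra.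
Qed.

Lemma fib_lim {X Y} (dX : Metric X) (dY : Metric Y) (f : X -> Y) y (ys : nat -> Y) x :
  continuous dX dY f -> (forall j, mdist dY y (ys j) < ie j) ->
  (forall eps, 0 < eps -> forall N, exists j, (N <= j)%nat /\ exists a, f a = ys j /\ mdist dX x a < eps) ->
  f x = y.
Proof.
  intros cf hy H. apply (eq_small dY). intros eps he.
  destruct (cf x (eps/2)) as [del [hd Hd]]. lra.
  destruct (ie_small (eps/2)) as [N hN]. lra.
  destruct (H del hd N) as [j [hj [a [fa hxa]]]].
  specialize (Hd a hxa). rewrite fa in Hd. pose proof (hy j). pose proof (ie_mono N j hj).
  rewrite (dsym dY y) in H0. pose proof (dtri dY (f x) (ys j) y). lra.
Qed.

Definition LsP {T} (d : Metric T) (C : nat -> T -> Prop) (x : T) : Prop :=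
  forall eps, 0 < eps -> forall N, exists j, (N <= j)%nat /\ exists a, C j a /\ mdist d x a < eps.
Definition LiP {T} (d : Metric T) (C : nat -> T -> Prop) (x : T) : Prop :=
  forall eps, 0 < eps -> exists N, forall j, (N <= j)%nat -> exists a, C j a /\ mdist d x a < eps.
Definition nearC {T} (d : Metric T) (F : T -> Prop) (C : nat -> T -> Prop) : Prop :=
  forall eps, 0 < eps -> exists N, forall j, (N <= j)%nat -> forall w, C j w -> exists c, F c /\ mdist d w c < eps.

Lemma Li_Ls {T} (d : Metric T) C x : LiP d C x -> LsP d C x.
Proof.
  intros H e he N. destruct (H e he) as [N' H']. exists (Nat.max N N'). split. lia.
  apply H'. lia.
Qed.

Lemma Ls_closure {T} (d : Metric T) C p :
  (forall eps, 0 < eps -> exists q, LsP d C q /\ mdist d p q < eps) -> LsP d C p.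
Proof.
  intros H e he N. destruct (H (e/2)) as [q [Lq hq]]. lra.
  destruct (Lq (e/2) ltac:(lra) N) as [j [hj [a [Ca ha]]]]. exists j; split; auto.
  exists a; split; auto. pose proof (dtri d p q a). lra.
Qed.

Lemma Ls_nearF {T} (d : Metric T) F C p :
  nearC d F C -> LsP d C p -> forall eps, 0 < eps -> exists c, F c /\ mdist d p c < eps.
Proof.
  intros nC Lp e he. destruct (nC (e/2) ltac:(lra)) as [N HN].
  destruct (Lp (e/2) ltac:(lra) N) as [j [hj [a [Ca ha]]]].
  destruct (HN j hj a Ca) as [c [Fc hc]]. exists c; split; auto.
  pose proof (dtri d p a c). lra.
Qed.

Lemma Ls_seq_near {T} (d : Metric T) F C (u : nat -> T) :
  nearC d F C -> (forall i, LsP d C (u i)) -> nearF d F u.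
Proof.
  intros nC Hu e he. exists 0%nat. intros k _. eapply Ls_nearF; eauto.
Qed.

Lemma Ls_cluster {T} (d : Metric T) C (u : nat -> T) p :
  (forall i, LsP d C (u i)) ->
  (forall eps, 0 < eps -> forall N, exists k, (N <= k)%nat /\ mdist d (u k) p < eps) ->
  LsP d C p.
Proof.
  intros Hu Hp. apply Ls_closure. intros e he. destruct (Hp e he 0%nat) as [k [_ hk]].
  exists (u k). split; auto. rewrite dsym; auto.
Qed.

Lemma notopen_cluster {T} (d : Metric T) (U : T -> Prop) (u : nat -> T) p :
  open d U -> (forall i, ~ U (u i)) ->
  (forall eps, 0 < eps -> forall N, exists k, (N <= k)%nat /\ mdist d (u k) p < eps) -> ~ U p.
Proof.
  intros oU Hu Hp Up. destruct (oU p Up) as [r [hr H]].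
  destruct (Hp r hr 0%nat) as [k [_ hk]]. apply (Hu k). apply H. unfold ball. rewrite dsym; auto.
Qed.

Lemma LsConn_aux {T} (d : Metric T) (F : T -> Prop) (C : nat -> T -> Prop) x0 b2
  (U W : T -> Prop) :
  Defs.compact d F -> (forall j, connected d (C j)) -> nearC d F C ->
  LiP d C x0 -> open d U -> open d W ->
  (forall x, LsP d C x -> U x \/ W x) ->
  (forall x, LsP d C x -> U x -> W x -> False) ->
  ~ U x0 -> LsP d C b2 -> ~ W b2 -> False.
Proof.
  intros cF cC nC Lx0 oU oW cov dis nUx0 Lb2 nWb2.
  set (K1 := fun a => LsP d C a /\ ~ U a).
  set (K2 := fun b => LsP d C b /\ ~ W b).
  assert (gap : exists r, 0 < r /\ forall a b, K1 a -> K2 b -> r <= mdist d a b).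
  { apply NNPP. intros Hn.
    assert (Hs : forall i, exists ab : T * T, K1 (fst ab) /\ K2 (snd ab) /\ mdist d (fst ab) (snd ab) < ie i).
    { intros i. apply NNPP. intros H1. apply Hn. exists (ie i). split. apply ie_pos.
      intros a b ha hb. destruct (Rle_or_lt (ie i) (mdist d a b)) as [h|h]; auto.
      exfalso. apply H1. exists (a, b). auto. }
    apply mychoice in Hs. destruct Hs as [h Hh].
    set (a := fun i => fst (h i)). set (b := fun i => snd (h i)).
    assert (nA : nearF d F a). { apply (Ls_seq_near d F C); auto. intros i; apply (Hh i). }
    destruct (cluster d F a cF nA) as [p [Fp Hp]].
    assert (Lp : LsP d C p). { apply (Ls_cluster d C a); auto. intros i; apply (Hh i). }
    assert (nUp : ~ U p). { apply (notopen_cluster d U a); auto. intros i; apply (Hh i). }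
    assert (nWp : ~ W p).
    { apply (notopen_cluster d W b); auto. intros i; apply (Hh i).
      intros e he N. destruct (ie_small (e/2)) as [i0 hi0]. lra.
      destruct (Hp (e/2) ltac:(lra) (Nat.max N i0)) as [k [hk hak]].
      exists k. split. lia. destruct (Hh k) as [_ [_ hab]].
      pose proof (ie_mono i0 k ltac:(lia)). pose proof (dtri d (b k) (a k) p).
      rewrite (dsym d (b k) (a k)) in H0. unfold a, b in *. lra. }
    destruct (cov p Lp); auto. }
  destruct gap as [r [hr Hgap]].
  set (U' := Bset d K2 (r/3)). set (W' := Bset d K1 (r/3)).
  assert (disj : forall w, U' w -> W' w -> False).
  { intros w [b [Kb hb]] [a [Ka ha]]. specialize (Hgap a b Ka Kb).
    pose proof (dtri d a w b). rewrite (dsym d a w) in H. lra. }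
  assert (ev : exists N, forall j, (N <= j)%nat -> forall w, C j w -> U' w \/ W' w).
  { apply NNPP. intros Hn.
    assert (Hs : forall i, exists jw : nat * T, (i <= fst jw)%nat /\ C (fst jw) (snd jw) /\
        ~ U' (snd jw) /\ ~ W' (snd jw)).
    { intros i. apply NNPP. intros H1. apply Hn. exists i. intros j hj w Cw.
      apply NNPP. intros H2. apply H1. exists (j, w). simpl. tauto. }
    apply mychoice in Hs. destruct Hs as [h Hh].
    set (w := fun i => snd (h i)).
    assert (nW : nearF d F w).
    { intros e he. destruct (nC e he) as [N HN]. exists N. intros k hk.
      destruct (Hh k) as [h1 [h2 _]]. apply (HN (fst (h k))); auto. lia. }
    destruct (cluster d F w cF nW) as [p [Fp Hp]].
    assert (Lp : LsP d C p).
    { intros e he N. destruct (Hp e he N) as [k [hk hwk]]. destruct (Hh k) as [h1 [h2 _]].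
      exists (fst (h k)). split. lia. exists (w k). split; auto. rewrite dsym; auto. }
    destruct (Hp (r/3) ltac:(lra) 0%nat) as [k [_ hk]].
    destruct (Hh k) as [_ [_ [n1 n2]]].
    destruct (classic (W p)) as [Wp|nWp].
    - destruct (classic (U p)) as [Up|nUp].
      + apply (dis p); auto.
      + apply n2. exists p. split. split; auto. exact hk.
    - apply n1. exists p. split. split; auto. exact hk. }
  destruct ev as [N HN].
  destruct (Lx0 (r/3) ltac:(lra)) as [N1 H1].
  destruct (Lb2 (r/3) ltac:(lra) (Nat.max N N1)) as [j [hj [c [Cc hc]]]].
  destruct (H1 j ltac:(lia)) as [w [Cw hw]].
  assert (Lx0s : LsP d C x0) by (apply Li_Ls; auto).
  destruct (cC j U' W' (Bset_open _ _ _) (Bset_open _ _ _)) as [h|h].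
  - intros z Cz. apply (HN j); auto. lia.
  - intros z _ a b. apply (disj z a b).
  - apply (disj w). apply h; auto. exists x0. split. split; auto. rewrite dsym; auto.
  - apply (disj c). exists b2. split. split; auto. rewrite dsym; auto. apply h; auto.
Qed.

Lemma LsConn {T} (d : Metric T) (F : T -> Prop) (C : nat -> T -> Prop) x0 :
  Defs.compact d F -> (forall j, connected d (C j)) -> nearC d F C ->
  LiP d C x0 -> connected d (LsP d C).
Proof.
  intros cF cC nC Lx0 U W oU oW cov dis.
  destruct (classic (forall p, LsP d C p -> U p)) as [h|h]; [left; auto|].
  destruct (classic (forall p, LsP d C p -> W p)) as [h'|h']; [right; auto|].
  exfalso.
  assert (Lx0s : LsP d C x0) by (apply Li_Ls; auto).
  destruct (classic (U x0)) as [Ux|nUx].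
  - apply h. intros p Lp. apply NNPP. intros nUp.
    destruct (classic (W x0)) as [Wx|nWx]. apply (dis x0); auto.
    apply (LsConn_aux d F C x0 p W U); auto.
    intros x Lx; destruct (cov x Lx); auto. intros x Lx a b; apply (dis x); auto.
  - apply h'. intros p Lp. apply NNPP. intros nWp.
    apply (LsConn_aux d F C x0 p U W); auto.
Qed.

Lemma net {T} (d : Metric T) (F : T -> Prop) e :
  Defs.compact d F -> 0 < e ->
  exists l, (forall p, In p l -> F p) /\ forall c, F c -> exists p, In p l /\ mdist d c p < e.
Proof.
  intros cF he.
  destruct (cF (fun U => exists p, F p /\ forall z, U z <-> mdist d p z < e)) as [l [H1 H2]].
  - intros U [p [_ E]]. apply (open_ext d (ball d p e)). intros z; unfold ball; rewrite E; tauto.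
    apply ball_open.
  - intros x Fx. exists (ball d x e). split. exists x. split; auto. unfold ball; tauto.
    unfold ball; rewrite d0; auto.
  - assert (K : exists lp, (forall p, In p lp -> F p) /\
       forall z, (exists U, In U l /\ U z) -> exists p, In p lp /\ mdist d z p < e).
    { clear H2. induction l as [|U l IH].
      - exists nil. split. intros ? []. intros z [U [[] _]].
      - destruct IH as [lp [A B]]. intros V hV; apply H1; right; auto.
        destruct (H1 U (or_introl eq_refl)) as [p [Fp E]].
        exists (p :: lp). split. intros q [<-|hq]; auto.
        intros z [V [[<-|hV] Vz]].
        + exists p. split. left; auto. apply E in Vz. rewrite dsym; auto.
        + destruct (B z) as [q [? ?]]. eauto. exists q. split; auto. right; auto. }
    destruct K as [lp [A B]]. exists lp. split; auto.
Qed.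

Definition infinite (I : nat -> Prop) : Prop := forall N, exists k, (N <= k)%nat /\ I k.


Lemma refine_gen {T} (near : T -> nat -> Prop) (l : list T) (I : nat -> Prop) :
  infinite I -> exists I', infinite I' /\ (forall k, I' k -> I k) /\
    forall p, In p l -> (forall k, I' k -> near p k) \/ (forall k, I' k -> ~ near p k).
Proof.
  revert I. induction l as [|p l IH]; intros I HI.
  - exists I. split; [auto|split; [auto|intros ? []]].
  - destruct (IH I HI) as [I1 [inf1 [sub1 hom1]]].
    destruct (classic (infinite (fun k => I1 k /\ near p k))) as [h|h].
    + exists (fun k => I1 k /\ near p k). split; auto. split. intros k [? ?]; auto.
      intros q [<-|hq]. left; intros k [? ?]; auto.
      destruct (hom1 q hq) as [h'|h']; [left|right]; intros k [? ?]; auto.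
    + assert (Hn : exists N, forall k, (N <= k)%nat -> I1 k -> ~ near p k).
      { apply NNPP. intros H1. apply h. intros N. apply NNPP. intros H2. apply H1.
        exists N. intros k hk Ik nk. apply H2. eauto. }
      destruct Hn as [N HN].
      exists (fun k => I1 k /\ (N <= k)%nat). split.
      { intros M. destruct (inf1 (Nat.max M N)) as [k [hk Ik]]. exists k. split. lia. split; auto. lia. }
      split. intros k [? ?]; auto.
      intros q [<-|hq]. right; intros k [? ?]; auto.
      destruct (hom1 q hq) as [h'|h']; [left|right]; intros k [? ?]; auto.
Qed.

Fixpoint iterI (stp : nat * (nat -> Prop) -> nat -> Prop) (i : nat) : nat -> Prop :=
  match i with
  | O => fun _ => True
  | S i' => stp (i', iterI stp i')
  end.

Lemma blaschke {T} (d : Metric T) (F : T -> Prop) (A : nat -> T -> Prop) :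
  Defs.compact d F -> nearC d F A ->
  exists phi : nat -> nat, (forall j, (j <= phi j)%nat) /\
    forall x, LsP d (fun j => A (phi j)) x -> LiP d (fun j => A (phi j)) x.
Proof.
  intros cF nA.
  assert (Hn : forall i, exists l, (forall p, In p l -> F p) /\
      forall c, F c -> exists p, In p l /\ mdist d c p < ie i).
  { intros i. apply net; auto. apply ie_pos. }
  apply mychoice in Hn. destruct Hn as [nets Hnets].
  set (near := fun i p k => exists a, A k a /\ mdist d a p < 2 * ie i).
  assert (Hs : forall iI : nat * (nat -> Prop), exists I',
     infinite (snd iI) -> infinite I' /\ (forall k, I' k -> snd iI k) /\
     forall p, In p (nets (fst iI)) -> (forall k, I' k -> near (fst iI) p k) \/
                                        (forall k, I' k -> ~ near (fst iI) p k)).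
  { intros [i I]. destruct (classic (infinite I)) as [h|h].
    - destruct (refine_gen (near i) (nets i) I h) as [I' ?]. exists I'. auto.
    - exists I. intros; contradiction. }
  apply mychoice in Hs. destruct Hs as [stp Hstp].
  set (sI := iterI stp).
  assert (inf : forall i, infinite (sI i)).
  { intros i; induction i as [|i IH]. intros N; exists N; split; [lia|unfold sI; simpl; auto].
    unfold sI; simpl. apply (Hstp (i, sI i)); auto. }
  assert (sub1 : forall i k, sI (S i) k -> sI i k).
  { intros i k h. apply (Hstp (i, sI i) (inf i)); auto. }
  assert (mono : forall i i', (i <= i')%nat -> forall k, sI i' k -> sI i k).
  { intros i i' h. induction h; auto. }
  assert (hom : forall i p, In p (nets i) -> (forall k, sI (S i) k -> near i p k) \/
                                            (forall k, sI (S i) k -> ~ near i p k)).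
  { intros i p hp. apply (Hstp (i, sI i) (inf i)); auto. }
  assert (Hphi : forall j, exists k, (j <= k)%nat /\ sI (S j) k).
  { intros j. apply (inf (S j)). }
  apply mychoice in Hphi. destruct Hphi as [phi Hphi].
  exists phi. split. intros j; apply Hphi.
  intros x Lx e he.
  destruct (ie_small (e/5)) as [i hi]. lra.
  pose proof (ie_pos i) as hpos.
  destruct (nA (ie i) hpos) as [N0 HN0].
  destruct (Lx (ie i) hpos (Nat.max i N0)) as [j0 [hj0 [a [Aa ha]]]].
  destruct (Hphi j0) as [hp0 sp0].
  destruct (HN0 (phi j0) ltac:(lia) a Aa) as [c [Fc hc]].
  destruct (Hnets i) as [_ Hn2]. destruct (Hn2 c Fc) as [p [inp hcp]].
  assert (hap : mdist d a p < 2 * ie i) by (pose proof (dtri d a c p); lra).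
  assert (np : near i p (phi j0)) by (exists a; split; auto).
  destruct (hom i p inp) as [hall|hnone].
  2:{ exfalso. apply (hnone (phi j0)); auto. apply (mono (S i) (S j0)); auto. lia. }
  exists i. intros j hj. destruct (Hphi j) as [_ spj].
  destruct (hall (phi j)) as [a' [Aa' ha']].
  { apply (mono (S i) (S j)); auto. lia. }
  exists a'. split; auto.
  pose proof (dtri d x a a'). pose proof (dtri d a p a'). rewrite (dsym d p a') in H0. lra.
Qed.

Theorem lemma2p3 :
  forall (X Y M : Type) (dX : Metric X) (dY : Metric Y) (dM : Metric M)
    (f : X -> Y),
    perfect dX dY f -> complete dM ->
    forall (m n : nat), (1 <= m)%nat -> (1 <= n)%nat ->
    forall (y : Y) (g : X -> M), inK dX dM f m n y g ->
    exists V : Y -> Prop, nbhd dY V y /\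
    exists delta, 0 < delta /\
      forall y' (g1 : X -> M), V y' -> continuous dX dM g1 ->
        (forall x, f x = y' -> mdist dM (g1 x) (g x) < delta) ->
        inK dX dM f m n y' g1.
Proof.
  intros X Y M dX dY dM f pf cM m n hm hn y g [cg Kg].
  pose proof pf as [cf [_ fcomp]].
  set (F := fun x => f x = y).
  assert (cF : Defs.compact dX F) by apply fcomp.
  apply NNPP; intros H.
  assert (Hk : forall k, exists y', exists g1, exists L,
    mdist dY y y' < ie k /\ continuous dX dM g1 /\
    (forall x, f x = y' -> mdist dM (g1 x) (g x) < ie k) /\
    continuum dX L /\ (forall x, L x -> f x = y') /\
    diam_ge dM (image g1 L) (1 / INR n) /\
    forall x, L x -> exists z, Cfib dX f g1 y' x z /\ ~ Bset dX L (1 / INR m) z).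
  { intros k. apply NNPP; intros Hn. apply H. exists (ball dY y (ie k)). split.
    { exists (ball dY y (ie k)). split. apply ball_open. split; auto.
      unfold ball; rewrite d0; apply ie_pos. }
    exists (ie k). split. apply ie_pos. intros y' g1 Vy' cg1 close. split; auto.
    intros L cL Lf dL. apply NNPP; intros Hb. apply Hn. exists y', g1, L.
    refine (conj Vy' (conj cg1 (conj close (conj cL (conj Lf (conj dL _)))))).
    intros x Lx. apply NNPP; intros h. apply Hb. exists x. split; auto.
    intros z cz. apply NNPP; intros nb. apply h. eauto. }
  apply mychoice in Hk. destruct Hk as [ys Hk].
  apply mychoice in Hk. destruct Hk as [gs Hk].
  apply mychoice in Hk. destruct Hk as [LL Hk].
  assert (nLL : nearC dX F LL).
  { intros e he. destruct (seq_near dX dY f y ys pf (fun j => proj1 (Hk j)) e he) as [N HN].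
    exists N. intros j hj w Lw. apply (HN j hj). apply (Hk j); auto. }
  destruct (blaschke dX F LL cF nLL) as [phi [Hphi LsLi]].
  set (yj := fun j => ys (phi j)). set (gj := fun j => gs (phi j)).
  set (Lj := fun j => LL (phi j)).
  assert (hy : forall j, mdist dY y (yj j) < ie j).
  { intros j. pose proof (ie_mono _ _ (Hphi j)). pose proof (proj1 (Hk (phi j))). unfold yj. lra. }
  assert (hg : forall j x, f x = yj j -> mdist dM (gj j x) (g x) < ie j).
  { intros j x fx. pose proof (ie_mono _ _ (Hphi j)). destruct (Hk (phi j)) as [_ [_ [h _]]].
    specialize (h x fx). unfold gj. lra. }
  assert (hcont : forall j, continuum dX (Lj j)) by (intros j; apply (Hk (phi j))).
  assert (hLf : forall j x, Lj j x -> f x = yj j) by (intros j; apply (Hk (phi j))).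
  assert (hdiam : forall j, diam_ge dM (image (gj j) (Lj j)) (1 / INR n)) by (intros j; apply (Hk (phi j))).
  assert (hbad : forall j x, Lj j x -> exists z, Cfib dX f (gj j) (yj j) x z /\ ~ Bset dX (Lj j) (1 / INR m) z)
    by (intros j; apply (Hk (phi j))).
  assert (LsLi' : forall x, LsP dX Lj x -> LiP dX Lj x) by exact LsLi.
  clearbody yj gj Lj. clear Hk LsLi. rename LsLi' into LsLi.
  assert (nearY : forall (sg : nat -> nat) (C : nat -> X -> Prop), (forall j, (j <= sg j)%nat) ->
     (forall j w, C j w -> f w = yj (sg j)) -> nearC dX F C).
  { intros sg C hsg hC e he. destruct (seq_near dX dY f y yj pf hy e he) as [N HN].
    exists N. intros j hj w Cw. apply (HN (sg j)). specialize (hsg j). lia. auto. }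
  assert (fibLs : forall (sg : nat -> nat) (C : nat -> X -> Prop) x, (forall j, (j <= sg j)%nat) ->
     (forall j w, C j w -> f w = yj (sg j)) -> LsP dX C x -> f x = y).
  { intros sg C x hsg hC Lx. apply (fib_lim dX dY f y (fun j => yj (sg j)) x cf).
    intros j. pose proof (hy (sg j)). pose proof (ie_mono _ _ (hsg j)). lra.
    intros e he N. destruct (Lx e he N) as [j [hj [a [Ca ha]]]]. exists j. split; auto.
    exists a. split; auto. }
  assert (nL : nearC dX F Lj) by (apply (nearY (fun j => j)); auto).
  set (Lim := LiP dX Lj).
  assert (LimF : forall x, Lim x -> f x = y).
  { intros x Lx. apply (fibLs (fun j => j) Lj x); auto. apply Li_Ls; auto. }
  assert (Ha : forall j, exists a, Lj j a) by (intros j; apply (hcont j)).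
  apply mychoice in Ha. destruct Ha as [aj Haj].
  assert (naj : nearF dX F aj).
  { intros e he. destruct (nL e he) as [N HN]. exists N. intros k hk. apply (HN k hk); auto. }
  destruct (cluster dX F aj cF naj) as [p0 [_ Hp0]].
  assert (Lp0 : Lim p0).
  { apply LsLi. intros e he N. destruct (Hp0 e he N) as [k [hk hak]]. exists k. split; auto.
    exists (aj k). split; auto. rewrite dsym; auto. }
  assert (cLim : Defs.compact dX Lim).
  { apply (closed_sub_compact dX F); auto.
    intros x nx. apply NNPP. intros h1. apply nx. apply LsLi. apply Ls_closure.
    intros e he. apply NNPP; intros h2. apply h1. exists e. split; auto.
    intros z bz Lz. apply h2. exists z. split; [apply Li_Ls; auto| auto]. }
  assert (conLim : connected dX Lim).
  { apply (connected_ext dX (LsP dX Lj)). intros z; split; [apply LsLi|apply Li_Ls].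
    apply (LsConn dX F Lj p0); auto. intros j; apply (hcont j). }
  assert (dLim : diam_ge dM (image g Lim) (1 / INR n)).
  { intros s hs. set (s' := (s + 1 / INR n) / 2).
    assert (Hab : forall j, exists ab : X * X, Lj j (fst ab) /\ Lj j (snd ab) /\
                    s' < mdist dM (gj j (fst ab)) (gj j (snd ab))).
    { intros j. destruct (hdiam j s') as [p [q [[a [La ea]] [[b [Lb eb]] hpq]]]].
      unfold s'; lra. exists (a, b). simpl. subst. auto. }
    apply mychoice in Hab. destruct Hab as [ab Hab].
    set (a := fun j => fst (ab j)). set (b := fun j => snd (ab j)).
    assert (na : nearF dX F a).
    { intros e he. destruct (nL e he) as [N HN]. exists N. intros k hk. apply (HN k hk). apply Hab. }
    destruct (cluster dX F a cF na) as [pa [_ Hpa]].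
    assert (Hka : forall i, exists k, (i <= k)%nat /\ mdist dX (a k) pa < ie i).
    { intros i. apply (Hpa (ie i) (ie_pos i) i). }
    apply mychoice in Hka. destruct Hka as [ka Hka].
    assert (nb : nearF dX F (fun i => b (ka i))).
    { intros e he. destruct (nL e he) as [N HN]. exists N. intros k hk.
      apply (HN (ka k)). pose proof (proj1 (Hka k)). lia. apply Hab. }
    destruct (cluster dX F _ cF nb) as [qb [_ Hqb]].
    assert (Lpa : Lim pa).
    { apply LsLi. intros e he N. destruct (Hpa e he N) as [k [hk h]]. exists k. split; auto.
      exists (a k). split. apply Hab. rewrite dsym; auto. }
    assert (Lqb : Lim qb).
    { apply LsLi. intros e he N. destruct (Hqb e he N) as [k [hk h]]. exists (ka k).
      split. pose proof (proj1 (Hka k)); lia.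
      exists (b (ka k)). split. apply Hab. rewrite dsym; auto. }
    exists (g pa), (g qb). split. exists pa; auto. split. exists qb; auto.
    set (eta := (s' - s) / 5).
    assert (heta : 0 < eta) by (unfold eta, s'; lra).
    destruct (cg pa eta heta) as [d1 [hd1 Hd1]].
    destruct (cg qb eta heta) as [d2 [hd2 Hd2]].
    destruct (ie_small (Rmin d1 eta)) as [i0 hi0]. apply Rmin_glb_lt; auto.
    pose proof (Rmin_l d1 eta). pose proof (Rmin_r d1 eta).
    destruct (Hqb d2 hd2 i0) as [i [hi hbi]].
    destruct (Hka i) as [hki hai].
    set (k := ka i) in *.
    pose proof (ie_mono _ _ hi). pose proof (ie_mono _ _ hki).
    assert (e1 : mdist dM (g pa) (g (a k)) < eta) by (apply Hd1; rewrite dsym; lra).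
    assert (e2 : mdist dM (g qb) (g (b k)) < eta) by (apply Hd2; rewrite dsym; lra).
    destruct (Hab k) as [La [Lb hab]].
    assert (e3 : mdist dM (gj k (a k)) (g (a k)) < ie k) by (apply hg, hLf; auto).
    assert (e4 : mdist dM (gj k (b k)) (g (b k)) < ie k) by (apply hg, hLf; auto).
    fold (a k) (b k) in hab.
    pose proof (dtri dM (gj k (a k)) (g (a k)) (gj k (b k))) as t1.
    pose proof (dtri dM (g (a k)) (g pa) (gj k (b k))) as t2.
    pose proof (dtri dM (g pa) (g qb) (gj k (b k))) as t3.
    pose proof (dtri dM (g qb) (g (b k)) (gj k (b k))) as t4.
    rewrite (dsym dM (g pa)) in e1. rewrite (dsym dM (gj k (b k))) in e4.
    assert (ie k < eta) by lra.
    unfold eta in *. lra. }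
  destruct (Kg Lim) as [x [Lx Hx]]; auto.
  split; auto. exists p0; auto.
  assert (Hxi : forall i, exists jx : nat * X, (i <= fst jx)%nat /\ Lj (fst jx) (snd jx) /\
                 mdist dX x (snd jx) < ie i).
  { intros i. destruct (Lx (ie i) (ie_pos i)) as [N HN].
    destruct (HN (Nat.max N i) ltac:(lia)) as [a [La ha]]. exists (Nat.max N i, a). simpl.
    split; auto. lia. }
  apply mychoice in Hxi. destruct Hxi as [jx Hjx].
  set (sg := fun i => fst (jx i)). set (xi := fun i => snd (jx i)).
  assert (hsg : forall i, (i <= sg i)%nat) by (intros i; apply (Hjx i)).
  assert (Lxi : forall i, Lj (sg i) (xi i)) by (intros i; apply (Hjx i)).
  assert (dxi : forall i, mdist dX x (xi i) < ie i) by (intros i; apply (Hjx i)).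
  clearbody sg xi. clear Hjx.
  set (C := fun i => Cfib dX f (gj (sg i)) (yj (sg i)) (xi i)).
  assert (Hz : forall i, exists z, C i z /\ ~ Bset dX (Lj (sg i)) (1 / INR m) z).
  { intros i. apply hbad. auto. }
  apply mychoice in Hz. destruct Hz as [zi Hzi].
  assert (CF : forall i w, C i w -> gj (sg i) w = gj (sg i) (xi i) /\ f w = yj (sg i)).
  { intros i w [A [_ [sA [_ Aw]]]]. apply sA; auto. }
  assert (nC : nearC dX F C) by (apply (nearY sg); auto; intros j w Cw; apply (CF j w Cw)).
  assert (cC : forall i, connected dX (C i)) by (intros i; apply component_connected).
  assert (LiC : LiP dX C x).
  { intros e he. destruct (ie_small e he) as [N hN]. exists N. intros j hj.
    exists (xi j). split. apply component_self. split; auto.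
    pose proof (dxi j). pose proof (ie_mono _ _ hj). lra. }
  set (K := LsP dX C).
  assert (conK : connected dX K) by (apply (LsConn dX F C x); auto).
  assert (nz : nearF dX F zi).
  { intros e he. destruct (nC e he) as [N HN]. exists N. intros k hk. apply (HN k hk). apply Hzi. }
  destruct (cluster dX F zi cF nz) as [z [_ Hzc]].
  assert (Kz : K z).
  { intros e he N. destruct (Hzc e he N) as [k [hk h]]. exists k. split; auto.
    exists (zi k). split. apply Hzi. rewrite dsym; auto. }
  assert (KS : forall w, K w -> g w = g x /\ f w = y).
  { intros w Kw. split.
    2:{ apply (fibLs sg C w); auto. intros j v Cv; apply (CF j v Cv). }
    apply (eq_small dM). intros e he.
    destruct (cg w (e/5)) as [d1 [hd1 Hd1]]. lra.
    destruct (cg x (e/5)) as [d2 [hd2 Hd2]]. lra.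
    destruct (ie_small (Rmin d2 (e/5))) as [i0 hi0]. apply Rmin_glb_lt; lra.
    pose proof (Rmin_l d2 (e/5)). pose proof (Rmin_r d2 (e/5)).
    destruct (Kw d1 hd1 i0) as [i [hi [c [Cc hc]]]].
    destruct (CF i c Cc) as [gc fc].
    pose proof (ie_mono _ _ hi). pose proof (ie_mono _ _ (hsg i)).
    assert (e1 : mdist dM (g w) (g c) < e/5) by auto.
    assert (e2 : mdist dM (gj (sg i) c) (g c) < ie (sg i)) by auto.
    assert (e3 : mdist dM (gj (sg i) (xi i)) (g (xi i)) < ie (sg i)) by auto.
    assert (e4 : mdist dM (g x) (g (xi i)) < e/5).
    { apply Hd2. pose proof (dxi i). lra. }
    rewrite gc in e2.
    pose proof (dtri dM (g w) (g c) (g x)) as t1.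
    pose proof (dtri dM (g c) (gj (sg i) (xi i)) (g x)) as t2.
    pose proof (dtri dM (gj (sg i) (xi i)) (g (xi i)) (g x)) as t3.
    rewrite (dsym dM (gj (sg i) (xi i))) in e2. rewrite (dsym dM (g x)) in e4. lra. }
  assert (Cz : Cfib dX f g y x z).
  { exists K. split; auto. split; auto. split; auto. apply Li_Ls; auto. }
  destruct (Hx z Cz) as [a [La hza]].
  set (ep := (1 / INR m - mdist dX z a) / 2).
  assert (hep : 0 < ep) by (unfold ep; lra).
  destruct (La ep hep) as [N1 HN1].
  destruct (Hzc ep hep N1) as [i [hi hzi]].
  destruct (HN1 (sg i)) as [a' [La' ha']]. pose proof (hsg i); lia.
  apply (proj2 (Hzi i)). exists a'. split; auto.
  pose proof (dtri dX (zi i) z a'). pose proof (dtri dX z a a'). unfold ep in *. lra.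
Qed.
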